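(* Let $f\colon M\to\mathbb H$ be a minimal conformal immersion on a simply connected Riemann surface with right normal $R$ and conjugate $f^*$. Let $\mu\in\mathbb C\setminus\{0,1\}$, $m\in\mathbb H_*$, $\hat a=m\frac{\mu+\mu^{-1}}2m^{-1}$, $\hat b=mi\frac{\mu^{-1}-\mu}2m^{-1}$, $\rho=m\frac{i(1+\mu)}{1-\mu}m^{-1}$, and consider the minimal surface $h=f\hat b+f^*(\hat a-1)$ in the right associated family of $f$, with conjugate $h^*=f^*\hat b-f(\hat a-1)$ and right normal $R_h=(\rho+R)R(\rho+R)^{-1}$. Then $$(fR-f^* )(R+\rho)^{-1}=-\tfrac12\big(hR_h-h^*\big).$$ Consequently every non-constant $\mu$-Darboux transform $f^\sharp=(fR-f^* )(R+\rho)^{-1}$ of $f$ is the associated Willmore surface $gR_g-g^*$ of the minimal surface $g=-\tfrac12 h$ in the right associated family of $f$.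
   Context: Quaternions $\mathbb H$, $\mathbb H_*=\mathbb H\setminus\{0\}$, $\mathbb C=\operatorname{span}_{\mathbb R}\{1,i\}$. $*\omega(X)=\omega(JX)$; right normal defined by $*df=-df\,R$; conjugate surface $df^*=-*df$. The right associated family of $f$ consists of the minimal surfaces $fp+f^*q$, $p,q\in\mathbb H$. For a minimal surface $g$ with right normal $R_g$ and conjugate $g^*$, the associated Willmore surface is $g^\flat=gR_g-g^*$. The non-constant $\mu$-Darboux transforms of $f$ (line bundles spanned by parallel sections of the associated family of flat connections of the conformal Gauss map of $f$ at $\lambda=\mu$, not of the form $(n,0)^t$) are exactly the maps $(fR-f^* )(R+\rho)^{-1}$ with $m\in\mathbb H_*$ and $f^*$ a conjugate surface. *)

(* Defs.v *)
From Stdlib Require Import Reals.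
Open Scope R_scope.

Record quat := mkQ { qr : R; qi : R; qj : R; qk : R }.

Definition qzero : quat := mkQ 0 0 0 0.
Definition qone  : quat := mkQ 1 0 0 0.
Definition qI    : quat := mkQ 0 1 0 0.
Definition qadd (a b : quat) : quat :=
  mkQ (qr a + qr b) (qi a + qi b) (qj a + qj b) (qk a + qk b).
Definition qopp (a : quat) : quat := mkQ (- qr a) (- qi a) (- qj a) (- qk a).
Definition qsub (a b : quat) : quat := qadd a (qopp b).
Definition qscal (s : R) (a : quat) : quat :=
  mkQ (s * qr a) (s * qi a) (s * qj a) (s * qk a).
Definition qmul (a b : quat) : quat :=
  mkQ (qr a * qr b - qi a * qi b - qj a * qj b - qk a * qk b)
      (qr a * qi b + qi a * qr b + qj a * qk b - qk a * qj b)
      (qr a * qj b - qi a * qk b + qj a * qr b + qk a * qi b)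
      (qr a * qk b + qi a * qj b - qj a * qi b + qk a * qr b).
Definition qnorm2 (a : quat) : R := qr a ^ 2 + qi a ^ 2 + qj a ^ 2 + qk a ^ 2.
Definition qdot (a b : quat) : R :=
  qr a * qr b + qi a * qi b + qj a * qj b + qk a * qk b.
Definition qconj (a : quat) : quat := mkQ (qr a) (- qi a) (- qj a) (- qk a).
(* inverse (meaningful for a <> 0) *)
Definition qinv (a : quat) : quat := qscal (/ qnorm2 a) (qconj a).

Definition in_C (a : quat) : Prop := qj a = 0 /\ qk a = 0.

Definition pt := (R * R)%type.

Definition is_open (U : pt -> Prop) : Prop :=
  forall p, U p -> exists e, 0 < e /\
    forall q, (fst q - fst p) ^ 2 + (snd q - snd p) ^ 2 < e ^ 2 -> U q.

Definition hderiv (g : R -> quat) (t : R) (D : quat) : Prop :=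
  derivable_pt_lim (fun s => qr (g s)) t (qr D) /\
  derivable_pt_lim (fun s => qi (g s)) t (qi D) /\
  derivable_pt_lim (fun s => qj (g s)) t (qj D) /\
  derivable_pt_lim (fun s => qk (g s)) t (qk D).

Definition pd_x (F : pt -> quat) (p : pt) (D : quat) : Prop :=
  hderiv (fun s => F (s, snd p)) (fst p) D.
Definition pd_y (F : pt -> quat) (p : pt) (D : quat) : Prop :=
  hderiv (fun s => F (fst p, s)) (snd p) D.

Definition conformal_immersion (U : pt -> Prop) (f : pt -> quat) : Prop :=
  forall p, U p -> exists fx fy, pd_x f p fx /\ pd_y f p fy /\
    fx <> qzero /\ qnorm2 fx = qnorm2 fy /\ qdot fx fy = 0.

(* minimal conformal immersion: conformal immersion with d*df = 0,
   i.e. f harmonic: f_xx + f_yy = 0 *)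
Definition minimal_conformal_immersion (U : pt -> Prop) (f : pt -> quat) : Prop :=
  conformal_immersion U f /\
  exists fx fy : pt -> quat,
    (forall p, U p -> pd_x f p (fx p) /\ pd_y f p (fy p)) /\
    (forall p, U p -> exists fxx fyy,
        pd_x fx p fxx /\ pd_y fy p fyy /\ qadd fxx fyy = qzero).

(* With J d_x = d_y, J d_y = - d_x and *w(X) = w(JX):
   right normal  *df = - df R   <=>  f_y = - f_x R  and  - f_x = - f_y R *)
Definition right_normal (U : pt -> Prop) (f Rn : pt -> quat) : Prop :=
  forall p, U p -> exists fx fy, pd_x f p fx /\ pd_y f p fy /\
    fy = qopp (qmul fx (Rn p)) /\ qopp fx = qopp (qmul fy (Rn p)).

(* conjugate surface  df^* = - *df  <=>  fs_x = - f_y  and  fs_y = f_x *)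
Definition conjugate_surface (U : pt -> Prop) (f fs : pt -> quat) : Prop :=
  forall p, U p -> exists fx fy, pd_x f p fx /\ pd_y f p fy /\
    pd_x fs p (qopp fy) /\ pd_y fs p fx.

Definition a_hat (m mu : quat) : quat :=
  qmul (qmul m (qscal (1/2) (qadd mu (qinv mu)))) (qinv m).
Definition b_hat (m mu : quat) : quat :=
  qmul (qmul m (qmul qI (qscal (1/2) (qsub (qinv mu) mu)))) (qinv m).
Definition rho_of (m mu : quat) : quat :=
  qmul (qmul m (qmul (qmul qI (qadd qone mu)) (qinv (qsub qone mu)))) (qinv m).

Definition willmore_assoc (g Rg gs : pt -> quat) (p : pt) : quat :=
  qsub (qmul (g p) (Rg p)) (gs p).

(* Main.v *)
Require Import Defs.
From Stdlib Require Import Reals Lra.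
Open Scope R_scope.


Lemma mkQ_eq a1 a2 a3 a4 b1 b2 b3 b4 : a1 = b1 -> a2 = b2 -> a3 = b3 -> a4 = b4 ->
  mkQ a1 a2 a3 a4 = mkQ b1 b2 b3 b4.
Proof. intros; subst; reflexivity. Qed.
Ltac qdest := repeat match goal with q : quat |- _ => destruct q end.
Ltac qring := qdest; cbv beta iota zeta delta [qsub qadd qopp qscal qmul qone qzero qI Defs.qr Defs.qi Defs.qj Defs.qk]; apply mkQ_eq; ring.

Lemma dl_add f g x a b : derivable_pt_lim f x a -> derivable_pt_lim g x b ->
  derivable_pt_lim (fun s => f s + g s) x (a + b).
Proof. apply derivable_pt_lim_plus. Qed.
Lemma dl_sub f g x a b : derivable_pt_lim f x a -> derivable_pt_lim g x b ->
  derivable_pt_lim (fun s => f s - g s) x (a - b).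
Proof. apply derivable_pt_lim_minus. Qed.
Lemma dl_opp f x a : derivable_pt_lim f x a ->
  derivable_pt_lim (fun s => - f s) x (- a).
Proof. apply derivable_pt_lim_opp. Qed.
Lemma dl_mulc f x a c : derivable_pt_lim f x a ->
  derivable_pt_lim (fun s => f s * c) x (a * c).
Proof. intro H. replace (a*c) with (a * c + f x * 0) by ring.
  apply (derivable_pt_lim_mult f (fct_cte c)); auto. apply derivable_pt_lim_const. Qed.
Lemma dl_cmul f x a c : derivable_pt_lim f x a ->
  derivable_pt_lim (fun s => c * f s) x (c * a).
Proof. intro H. apply (derivable_pt_lim_scal f c x a H). Qed.

Ltac dl := repeat (apply dl_add || apply dl_sub || apply dl_opp || apply dl_mulc || apply dl_cmul).

Lemma hderiv_add g1 g2 t D1 D2 : hderiv g1 t D1 -> hderiv g2 t D2 ->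
  hderiv (fun s => qadd (g1 s) (g2 s)) t (qadd D1 D2).
Proof. intros (a1&a2&a3&a4) (b1&b2&b3&b4); unfold qadd; simpl;
  repeat split; simpl; dl; auto. Qed.
Lemma hderiv_opp g t D : hderiv g t D -> hderiv (fun s => qopp (g s)) t (qopp D).
Proof. intros (a1&a2&a3&a4); unfold qopp; repeat split; simpl; dl; auto. Qed.
Lemma hderiv_mulr g t D c : hderiv g t D -> hderiv (fun s => qmul (g s) c) t (qmul D c).
Proof. intros (a1&a2&a3&a4); unfold qmul; repeat split; simpl; dl; auto. Qed.
Lemma hderiv_scal g t D c : hderiv g t D -> hderiv (fun s => qscal c (g s)) t (qscal c D).
Proof. intros (a1&a2&a3&a4); unfold qscal; repeat split; simpl; dl; auto. Qed.
Lemma hderiv_sub g1 g2 t D1 D2 : hderiv g1 t D1 -> hderiv g2 t D2 ->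
  hderiv (fun s => qsub (g1 s) (g2 s)) t (qsub D1 D2).
Proof. intros. unfold qsub. apply hderiv_add; auto. apply hderiv_opp; auto. Qed.
Lemma hderiv_val g t D D' : hderiv g t D -> D = D' -> hderiv g t D'.
Proof. intros; subst; auto. Qed.
Lemma hderiv_uniq g t D1 D2 : hderiv g t D1 -> hderiv g t D2 -> D1 = D2.
Proof. intros (a1&a2&a3&a4) (b1&b2&b3&b4). destruct D1, D2; simpl in *. f_equal;
  eapply uniqueness_limite; eauto. Qed.

Lemma qmul_assoc a b c : qmul a (qmul b c) = qmul (qmul a b) c. Proof. qring. Qed.
Lemma qnorm2_nz a : a <> qzero -> qnorm2 a <> 0.
Proof. intros H E; apply H; destruct a as [x y z w]; unfold qnorm2 in E; simpl in E.
  assert (x = 0) by nra. assert (y = 0) by nra. assert (z = 0) by nra. assert (w = 0) by nra.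
  subst; reflexivity. Qed.
Lemma qinv_r a : a <> qzero -> qmul a (qinv a) = qone.
Proof. intro H; pose proof (qnorm2_nz a H) as N; destruct a; unfold qnorm2 in N; simpl in N;
  unfold qinv, qmul, qscal, qconj, qone, qnorm2; simpl; f_equal; field; unfold pow in N; lra || auto. Qed.
Lemma qinv_l a : a <> qzero -> qmul (qinv a) a = qone.
Proof. intro H; pose proof (qnorm2_nz a H) as N; destruct a; unfold qnorm2 in N; simpl in N;
  unfold qinv, qmul, qscal, qconj, qone, qnorm2; simpl; f_equal; field; unfold pow in N; lra || auto. Qed.


Definition alp mu := qsub (qscal (1/2) (qadd mu (qinv mu))) qone.
Definition bet mu := qmul qI (qscal (1/2) (qsub (qinv mu) mu)).
Definition gam mu := qmul (qmul qI (qadd qone mu)) (qinv (qsub qone mu)).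

Lemma cinv x y : x*x+y*y <> 0 -> qinv (mkQ x y 0 0) = mkQ (x/(x*x+y*y)) (-y/(x*x+y*y)) 0 0.
Proof. intro; unfold qinv, qscal, qconj, qnorm2; simpl; f_equal; field; auto. Qed.

Section C.
Variables x y : R.
Hypothesis H0 : x*x + y*y <> 0.
Hypothesis H1 : (1-x)*(1-x) + y*y <> 0.
Let mu := mkQ x y 0 0.
Let a := (x + x/(x*x+y*y))/2 - 1.
Let b := (y - y/(x*x+y*y))/2.
Let n := (1-x)*(1-x)+y*y.
Let gr := (- y * (1-x) - (1+x) * y)/n.
Let gi := ((1+x)*(1-x) - y*y)/n.
Lemma alpE : alp mu = mkQ a b 0 0.
Proof. unfold alp, mu. rewrite cinv by auto. unfold qsub, qadd, qscal, qopp, qone; simpl; f_equal; unfold a, b; field; auto. Qed.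
Lemma gamE : gam mu = mkQ gr gi 0 0.
Proof. unfold gam, mu. replace (qsub qone (mkQ x y 0 0)) with (mkQ (1-x) (-y) 0 0)
  by (unfold qsub, qadd, qopp, qone; simpl; f_equal; ring).
  rewrite cinv by (intro E; apply H1; lra).
  unfold qmul, qadd, qone, qI; simpl; f_equal; unfold gr, gi, n; field; lra. Qed.
End C.
Section C2.
Variables x y : R.
Hypothesis H0 : x*x + y*y <> 0.
Hypothesis H1 : (1-x)*(1-x) + y*y <> 0.
Let mu := mkQ x y 0 0.
Lemma C1 : bet mu = qmul (gam mu) (alp mu).
Proof. unfold mu; rewrite gamE, alpE by auto. unfold bet; rewrite cinv by auto.
  unfold qmul, qscal, qsub, qadd, qopp, qI; simpl; f_equal; field; split; lra. Qed.
Lemma C2 : qmul (gam mu) (alp mu) = qmul (alp mu) (gam mu).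
Proof. unfold mu; rewrite gamE, alpE by auto. unfold qmul; simpl; f_equal; ring. Qed.
Lemma C3 : qadd (alp mu) (qmul (alp mu) (qmul (gam mu) (gam mu))) = mkQ (-2) 0 0 0.
Proof. unfold mu; rewrite gamE, alpE by auto.
  unfold qmul, qadd; simpl; f_equal; field; split; lra. Qed.
End C2.
Definition cj m x := qmul (qmul m x) (qinv m).
Lemma qmul_1r a : qmul a qone = a. Proof. qring. Qed.
Lemma cj_mul m x y : m <> qzero -> qmul (cj m x) (cj m y) = cj m (qmul x y).
Proof. intro H. unfold cj.
  rewrite (qmul_assoc (qmul (qmul m x) (qinv m)) (qmul m y) (qinv m)).
  rewrite (qmul_assoc (qmul (qmul m x) (qinv m)) m y).
  rewrite <- (qmul_assoc (qmul m x) (qinv m) m). rewrite qinv_l, qmul_1r by auto.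
  rewrite (qmul_assoc m x y). reflexivity. Qed.
Lemma A_cj m mu : m <> qzero -> qsub (a_hat m mu) qone = cj m (alp mu).
Proof. intro H. unfold a_hat, alp, cj. rewrite <- (qinv_r m H) at 1.
  generalize (qinv m) (qscal (1/2) (qadd mu (qinv mu))). intros; qring. Qed.

Lemma cj_add m x y : qadd (cj m x) (cj m y) = cj m (qadd x y).
Proof. unfold cj; generalize (qinv m); intros; qring. Qed.
Lemma qF n : qmul (mkQ (-2) 0 0 0) n = qscal (-2) n. Proof. qring. Qed.
Lemma qG m n : qmul m (qscal (-2) n) = qscal (-2) (qmul m n). Proof. qring. Qed.
Lemma in_C_form mu : in_C mu -> mu = mkQ (qr mu) (qi mu) 0 0.
Proof. destruct mu; unfold in_C; simpl; intros [-> ->]; auto. Qed.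

Section M.
Variables m mu : quat.
Hypothesis Hm : m <> qzero.
Hypothesis HC : in_C mu.
Hypothesis Hz : mu <> qzero.
Hypothesis H1 : mu <> qone.
Let A := qsub (a_hat m mu) qone.
Let rho := rho_of m mu.
Lemma cond0 : qr mu * qr mu + qi mu * qi mu <> 0.
Proof. intro E; apply Hz. destruct mu as [a b c d]; destruct HC as [Hc Hd]; simpl in *; subst. unfold qzero; assert (a*a=0) by nra; assert (b*b=0) by nra; f_equal; [destruct (Rmult_integral _ _ H)|destruct (Rmult_integral _ _ H0)]; auto. Qed.
Lemma cond1 : (1 - qr mu) * (1 - qr mu) + qi mu * qi mu <> 0.
Proof. intro E; apply H1. destruct mu as [a b c d]; destruct HC as [Hc Hd]; simpl in *; subst. unfold qone; pose proof (Rle_0_sqr (1-a)); pose proof (Rle_0_sqr b); unfold Rsqr in *; assert ((1-a)*(1-a)=0) by lra; assert (b*b=0) by lra; f_equal; [destruct (Rmult_integral _ _ H2); lra|destruct (Rmult_integral _ _ H3)]; auto. Qed.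
Lemma M1 : b_hat m mu = qmul rho A.
Proof. unfold A, rho. rewrite A_cj by auto. change (b_hat m mu) with (cj m (bet mu)).
  change (rho_of m mu) with (cj m (gam mu)). rewrite cj_mul by auto. f_equal.
  rewrite (in_C_form mu HC). apply C1. apply cond0. apply cond1. Qed.
Lemma M2 : qmul rho A = qmul A rho.
Proof. unfold A, rho. rewrite A_cj by auto. change (rho_of m mu) with (cj m (gam mu)).
  rewrite !cj_mul by auto. f_equal.
  rewrite (in_C_form mu HC). apply C2. apply cond0. apply cond1. Qed.
Lemma M3 : qadd A (qmul A (qmul rho rho)) = mkQ (-2) 0 0 0.
Proof. unfold A, rho. rewrite A_cj by auto. change (rho_of m mu) with (cj m (gam mu)).
  rewrite (cj_mul m (gam mu) (gam mu)), (cj_mul m (alp mu) _) by auto.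
  rewrite cj_add. rewrite (in_C_form mu HC). rewrite C3 by (apply cond0 || apply cond1).
  unfold cj. rewrite <- qmul_assoc.
  rewrite qF, qG, qinv_r by auto. unfold qscal, qone; simpl; f_equal; ring. Qed.
End M.


Definition two := mkQ 2 0 0 0.

Lemma cf1_id R rho A : qadd (qmul (qmul (qmul rho A) (qadd rho R)) R) (qmul A (qadd rho R)) = qadd (qscal (-2) R)
    (qsub (qadd (qadd (qmul (qadd (qadd A (qmul A (qmul rho rho))) two) R)
                      (qmul (qmul (qsub (qmul rho A) (qmul A rho)) rho) R))
                (qmul (qmul rho A) (qadd (qmul R R) qone)))
          (qsub (qmul rho A) (qmul A rho))).
Proof. unfold two. qring. Qed.

Lemma cf2_id R rho A : qsub (qmul (qmul A (qadd rho R)) R) (qmul (qmul rho A) (qadd rho R)) = qadd two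
    (qsub (qsub (qsub (qmul A (qadd (qmul R R) qone)) (qadd (qadd A (qmul A (qmul rho rho))) two))
             (qmul (qsub (qmul rho A) (qmul A rho)) rho))
          (qmul (qsub (qmul rho A) (qmul A rho)) R)).
Proof. unfold two. qring. Qed.

Lemma cK_id R rho A : qadd (qmul (qadd (qopp (qmul R (qmul rho A))) A) (qadd rho R))
               (qmul (qmul (qadd (qmul rho A) (qmul R A)) (qadd rho R)) R) =
  (qadd (qadd (qadd (qopp (qmul R (qadd (qadd A (qmul A (qmul rho rho))) two))) (qmul (qadd (qadd A (qmul A (qmul rho rho))) two) R))
     (qadd (qopp (qmul (qmul R (qsub (qmul rho A) (qmul A rho))) rho)) (qopp (qmul (qmul R (qsub (qmul rho A) (qmul A rho))) R))))
     (qadd (qadd (qmul (qmul (qsub (qmul rho A) (qmul A rho)) rho) R) (qmul (qmul rho A) (qadd (qmul R R) qone)))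
           (qadd (qopp (qsub (qmul rho A) (qmul A rho))) (qmul (qmul R A) (qadd (qmul R R) qone))))).
Proof. unfold two. qring. Qed.

Lemma cf1 R rho A : qadd (qmul R R) qone = qzero -> qsub (qmul rho A) (qmul A rho) = qzero ->
  qadd (qadd A (qmul A (qmul rho rho))) two = qzero ->
  qadd (qmul (qmul (qmul rho A) (qadd rho R)) R) (qmul A (qadd rho R)) = qscal (-2) R.
Proof. intros H1 H2 H3. rewrite cf1_id, H1, H2, H3. generalize (qmul rho A); intros; qring. Qed.

Lemma cf2 R rho A : qadd (qmul R R) qone = qzero -> qsub (qmul rho A) (qmul A rho) = qzero ->
  qadd (qadd A (qmul A (qmul rho rho))) two = qzero ->
  qsub (qmul (qmul A (qadd rho R)) R) (qmul (qmul rho A) (qadd rho R)) = two.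
Proof. intros H1 H2 H3. rewrite cf2_id, H1, H2, H3. clear. unfold two; qring. Qed.

Lemma cK R rho A : qadd (qmul R R) qone = qzero -> qsub (qmul rho A) (qmul A rho) = qzero ->
  qadd (qadd A (qmul A (qmul rho rho))) two = qzero ->
  qadd (qmul (qadd (qopp (qmul R (qmul rho A))) A) (qadd rho R))
               (qmul (qmul (qadd (qmul rho A) (qmul R A)) (qadd rho R)) R) = qzero.
Proof. intros H1 H2 H3. rewrite cK_id, H1, H2, H3. generalize (qmul rho A); intros; qring. Qed.


Lemma qmul_0r a : qmul a qzero = qzero. Proof. qring. Qed.

Lemma L_div S Y X R : S <> qzero -> qmul Y S = qopp (qmul (qmul X S) R) ->
  Y = qopp (qmul X (qmul (qmul S R) (qinv S))).
Proof. intros HS E.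
  transitivity (qmul (qmul Y S) (qinv S)).
  - rewrite <- qmul_assoc, qinv_r, qmul_1r by auto. reflexivity.
  - rewrite E. generalize (qinv S); intros; qring.
Qed.

Lemma L_div2 S Y X R : S <> qzero -> qadd (qmul R R) qone = qzero ->
  qmul Y S = qopp (qmul (qmul X S) R) ->
  qopp X = qopp (qmul Y (qmul (qmul S R) (qinv S))).
Proof. intros HS H1 E.
  assert (E1 : qmul Y (qmul (qmul S R) (qinv S)) = qmul (qmul (qmul Y S) R) (qinv S))
    by (generalize (qinv S); intros; qring).
  rewrite E1, E.
  assert (E2 : forall Z, qmul (qopp (qmul Z R)) R = qadd Z (qopp (qmul Z (qadd (qmul R R) qone))))
    by (intros; qring).
  rewrite E2, H1, qmul_0r.
  assert (E3 : forall Z, qadd Z (qopp qzero) = Z) by (intros; qring). rewrite E3.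
  rewrite <- qmul_assoc, qinv_r, qmul_1r by auto. reflexivity.
Qed.

Lemma L3 S Z h hs R c : S <> qzero ->
  Z = qscal c (qsub (qmul (qmul h S) R) (qmul hs S)) ->
  qmul Z (qinv S) = qscal c (qsub (qmul h (qmul (qmul S R) (qinv S))) hs).
Proof. intros HS E. subst Z.
  transitivity (qscal c (qsub (qmul h (qmul (qmul S R) (qinv S))) (qmul hs (qmul S (qinv S))))).
  - generalize (qinv S); intros; qring.
  - rewrite qinv_r, qmul_1r by auto. reflexivity.
Qed.

Lemma S_nz R rho A : qadd (qmul R R) qone = qzero ->
  qadd (qadd A (qmul A (qmul rho rho))) two = qzero -> qadd rho R <> qzero.
Proof. intros H1 H3 E.
  assert (ER : R = qopp rho).
  { destruct R, rho; unfold qadd, qzero, qopp in *; simpl in *; injection E; intros; f_equal; lra. }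
  subst R.
  assert (E1 : qadd (qmul rho rho) qone = qzero) by (rewrite <- H1; qring).
  assert (E2 : qadd (qadd A (qmul A (qmul rho rho))) two = qadd (qmul A (qadd (qmul rho rho) qone)) two) by qring.
  rewrite E2, E1, qmul_0r in H3. unfold two, qadd, qzero in H3; simpl in H3. injection H3; intros; lra.
Qed.

Lemma Rsq U f Rn p : U p -> conformal_immersion U f -> right_normal U f Rn ->
  qadd (qmul (Rn p) (Rn p)) qone = qzero.
Proof. intros Up Hc Hr.
  destruct (Hc p Up) as (fx0 & fy0 & Px0 & _ & Hnz & _).
  destruct (Hr p Up) as (fx & fy & Px & Py & E1 & E2).
  assert (fx0 = fx) by (eapply hderiv_uniq; eauto). subst fx0.
  set (R := Rn p) in *. clearbody R.
  assert (K : qmul fx (qadd (qmul R R) qone) = qsub (qopp (qmul (qopp (qmul fx R)) R)) (qopp fx)) by qring.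
  rewrite <- E1, <- E2 in K.
  assert (K2 : qsub (qopp fx) (qopp fx) = qzero) by qring. rewrite K2 in K.
  transitivity (qmul (qinv fx) (qmul fx (qadd (qmul R R) qone))).
  - rewrite qmul_assoc, qinv_l by auto. generalize (qadd (qmul R R) qone); intros; qring.
  - rewrite K. qring.
Qed.


Ltac qfield := qdest; cbv beta iota zeta delta [qsub qadd qopp qscal qmul qone qzero qI Defs.qr Defs.qi Defs.qj Defs.qk]; apply mkQ_eq; field.

Lemma qsub_diag x : qsub x x = qzero. Proof. qring. Qed.
Lemma qadd_comm x y : qadd x y = qadd y x. Proof. qring. Qed.
Lemma two_fact : qadd (mkQ (-2) 0 0 0) two = qzero. Proof. unfold two; qring. Qed.
Lemma G1 a b c d : qsub (qmul (qopp a) c) (qmul b d) = qopp (qadd (qmul a c) (qmul b d)). Proof. qring. Qed.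
Lemma G2 a b c d : qsub (qmul a c) (qmul b d) = qadd (qmul a c) (qmul (qopp b) d). Proof. qring. Qed.
Lemma G3 c a b d e : qscal c (qadd (qmul a b) (qmul d e)) = qadd (qmul a (qscal c b)) (qmul d (qscal c e)). Proof. qring. Qed.
Lemma G4 c a r b : qscal c (qsub (qmul a r) b) = qsub (qmul (qscal c a) r) (qscal c b). Proof. qring. Qed.

Lemma core2 fx fy R rho A b : fy = qopp (qmul fx R) -> b = qmul rho A ->
  qadd (qmul R R) qone = qzero -> qsub (qmul rho A) (qmul A rho) = qzero ->
  qadd (qadd A (qmul A (qmul rho rho))) two = qzero ->
  qmul (qadd (qmul fy b) (qmul fx A)) (qadd rho R) =
  qopp (qmul (qmul (qadd (qmul fx b) (qmul (qopp fy) A)) (qadd rho R)) R).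
Proof. intros -> -> H1 H2 H3.
  transitivity (qadd (qopp (qmul (qmul (qadd (qmul fx (qmul rho A)) (qmul (qopp (qopp (qmul fx R))) A)) (qadd rho R)) R))
    (qmul fx (qadd (qmul (qadd (qopp (qmul R (qmul rho A))) A) (qadd rho R))
               (qmul (qmul (qadd (qmul rho A) (qmul R A)) (qadd rho R)) R)))).
  - clear. qring.
  - rewrite cK by auto. clear. qring.
Qed.

Lemma core3 f fs R rho A b : b = qmul rho A ->
  qadd (qmul R R) qone = qzero -> qsub (qmul rho A) (qmul A rho) = qzero ->
  qadd (qadd A (qmul A (qmul rho rho))) two = qzero ->
  qsub (qmul f R) fs = qscal (-(1/2)) (qsub (qmul (qmul (qadd (qmul f b) (qmul fs A)) (qadd rho R)) R)
      (qmul (qsub (qmul fs b) (qmul f A)) (qadd rho R))).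
Proof. intros -> H1 H2 H3.
  transitivity (qscal (-(1/2)) (qadd (qmul f (qadd (qmul (qmul (qmul rho A) (qadd rho R)) R) (qmul A (qadd rho R))))
     (qmul fs (qsub (qmul (qmul A (qadd rho R)) R) (qmul (qmul rho A) (qadd rho R)))))).
  - rewrite cf1, cf2 by auto. clear. unfold two. qfield.
  - clear. qring.
Qed.

Lemma rn_scal U h Rh c : right_normal U h Rh -> right_normal U (fun p => qscal c (h p)) Rh.
Proof. intros H p Up. destruct (H p Up) as (hx&hy&Px&Py&E1&E2).
  exists (qscal c hx), (qscal c hy). split; [|split].
  - apply (hderiv_scal _ _ _ c Px).
  - apply (hderiv_scal _ _ _ c Py).
  - split.
    + rewrite E1. clear. qring.
    + transitivity (qscal c (qopp hx)). clear; qring. rewrite E2. clear; qring.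
Qed.

Lemma cs_scal U h hs c : conjugate_surface U h hs ->
  conjugate_surface U (fun p => qscal c (h p)) (fun p => qscal c (hs p)).
Proof. intros H p Up. destruct (H p Up) as (hx&hy&Px&Py&Psx&Psy).
  exists (qscal c hx), (qscal c hy). split; [|split; [|split]].
  - apply (hderiv_scal _ _ _ c Px).
  - apply (hderiv_scal _ _ _ c Py).
  - eapply hderiv_val. apply (hderiv_scal _ _ _ c Psx). clear; qring.
  - apply (hderiv_scal _ _ _ c Psy).
Qed.


Theorem mainTheorem19
  (U : pt -> Prop) (f fs Rn : pt -> quat) (mu m : quat) :
  is_open U ->
  minimal_conformal_immersion U f ->
  right_normal U f Rn ->
  conjugate_surface U f fs ->
  in_C mu -> mu <> qzero -> mu <> qone ->
  m <> qzero ->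
  let ah := a_hat m mu in
  let bh := b_hat m mu in
  let rho := rho_of m mu in
  let h := fun p => qadd (qmul (f p) bh) (qmul (fs p) (qsub ah qone)) in
  let hs := fun p => qsub (qmul (fs p) bh) (qmul (f p) (qsub ah qone)) in
  let Rh := fun p => qmul (qmul (qadd rho (Rn p)) (Rn p)) (qinv (qadd rho (Rn p))) in
  let fsharp := fun p => qmul (qsub (qmul (f p) (Rn p)) (fs p)) (qinv (qadd (Rn p) rho)) in
  (* h* is a conjugate of h and R_h is the right normal of h *)
  conjugate_surface U h hs /\
  right_normal U h Rh /\
  (* main identity *)
  (forall p, U p -> fsharp p = qscal (- (1/2)) (willmore_assoc h Rh hs p)) /\
  (* consequence: f# is the associated Willmore surface of g = -h/2,
     a member of the right associated family of f, with right normal R_g = R_h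
     and conjugate g* = -h*/2 *)
  (let g := fun p => qscal (- (1/2)) (h p) in
   let gs := fun p => qscal (- (1/2)) (hs p) in
   (exists P Q : quat, forall p, U p -> g p = qadd (qmul (f p) P) (qmul (fs p) Q)) /\
   right_normal U g Rh /\
   conjugate_surface U g gs /\
   (forall p, U p -> fsharp p = willmore_assoc g Rh gs p)).
Proof.
  intros HU Hmin Hrn Hcs HC Hz H1 Hm.
  destruct Hmin as [Hconf _].
  pose proof (M1 m mu Hm HC Hz H1) as HM1.
  pose proof (M2 m mu Hm HC Hz H1) as HM2.
  pose proof (M3 m mu Hm HC Hz H1) as HM3.
  assert (HH2 : qsub (qmul (rho_of m mu) (qsub (a_hat m mu) qone)) (qmul (qsub (a_hat m mu) qone) (rho_of m mu)) = qzero)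
    by (rewrite HM2; apply qsub_diag).
  assert (HH3 : qadd (qadd (qsub (a_hat m mu) qone) (qmul (qsub (a_hat m mu) qone) (qmul (rho_of m mu) (rho_of m mu)))) two = qzero)
    by (rewrite HM3; apply two_fact).
  clear HM2 HM3.
  intros ah bh rho h hs Rh fsharp.
  assert (CS : conjugate_surface U h hs).
  { intros p Up. destruct (Hcs p Up) as (fx & fy & Px & Py & Psx & Psy).
    exists (qadd (qmul fx bh) (qmul (qopp fy) (qsub ah qone))), (qadd (qmul fy bh) (qmul fx (qsub ah qone))).
    unfold pd_x, pd_y in *. unfold h, hs. split; [|split; [|split]].
    - apply hderiv_add; apply hderiv_mulr; assumption.
    - apply hderiv_add; apply hderiv_mulr; assumption.
    - eapply hderiv_val. apply hderiv_sub; apply hderiv_mulr; eassumption. apply G1.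
    - eapply hderiv_val. apply hderiv_sub; apply hderiv_mulr; eassumption. apply G2. }
  assert (RN : right_normal U h Rh).
  { intros p Up. destruct (Hrn p Up) as (fx & fy & Px & Py & E1 & E2).
    destruct (Hcs p Up) as (fx' & fy' & Px' & Py' & Psx & Psy).
    assert (fx' = fx) by exact (hderiv_uniq _ _ _ _ Px' Px).
    assert (fy' = fy) by exact (hderiv_uniq _ _ _ _ Py' Py). subst fx' fy'.
    pose proof (Rsq U f Rn p Up Hconf Hrn) as HR.
    pose proof (S_nz _ _ _ HR HH3) as HS.
    pose proof (core2 fx fy (Rn p) rho (qsub ah qone) bh E1 HM1 HR HH2 HH3) as K.
    exists (qadd (qmul fx bh) (qmul (qopp fy) (qsub ah qone))), (qadd (qmul fy bh) (qmul fx (qsub ah qone))).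
    split; [|split; [|split]].
    - unfold pd_x, pd_y in *. unfold h. apply hderiv_add; apply hderiv_mulr; assumption.
    - unfold pd_x, pd_y in *. unfold h. apply hderiv_add; apply hderiv_mulr; assumption.
    - unfold Rh. apply L_div; auto.
    - unfold Rh. apply L_div2; auto. }
  assert (MI : forall p, U p -> fsharp p = qscal (- (1/2)) (willmore_assoc h Rh hs p)).
  { intros p Up.
    pose proof (Rsq U f Rn p Up Hconf Hrn) as HR.
    pose proof (S_nz _ _ _ HR HH3) as HS.
    unfold fsharp, willmore_assoc, Rh. rewrite (qadd_comm (Rn p) rho).
    apply L3; auto. unfold h, hs. apply core3; auto. }
  split; [exact CS|split; [exact RN|split; [exact MI|]]].
  intros g gs. split; [|split; [|split]].
  - exists (qscal (-(1/2)) bh), (qscal (-(1/2)) (qsub ah qone)). intros p Up.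
    unfold g, h. apply G3.
  - apply rn_scal; auto.
  - apply cs_scal; auto.
  - intros p Up. rewrite MI by auto. unfold willmore_assoc, g, gs. apply G4.
Qed.
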